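(* Let $\Delta^m$ be the last matrix produced by the Incremental Sweeping Algorithm applied to a connection matrix $\Delta\in\mathbb F^{m\times m}$. For every $j$, if the $j$-th column of $\Delta^m$ is nonzero then the $j$-th row of $\Delta^m$ is zero; equivalently $\Delta^m_{\cdot j}\,\Delta^m_{j\cdot}=0$ (outer product) for all $j$.
   Context: Throughout, $\mathbb F$ is a field and $m\ge1$. $A_{i\cdot}$, $A_{\cdot j}$ denote the $i$-th row and $j$-th column of a matrix $A$. $U^{pq}$ is the $m\times m$ matrix whose only nonzero entry is a $1$ in position $(p,q)$. Superscripts on matrices are indices, not powers. A connection matrix (over $\mathbb F$) is a matrix $\Delta\in\mathbb F^{m\times m}$ together with a partition $\{1,\dots,m\}=J_0\sqcup\cdots\sqcup J_b$ (the column/row partition; the $J_k$ need not consist of consecutive integers) such that $\Delta$ is upper triangular, $\Delta\Delta=0$, and $\Delta_{ij}=0$ unless $i<j$ and $(i,j)\in\bigcup_{k=1}^bJ_{k-1}\times J_k$. For $1\le r\le m-1$ the $r$-th diagonal is $\{(j-r,j):r<j\le m\}$. Incremental Sweeping Algorithm (ISA) applied to a connection matrix $\Delta$: set $\Delta^0=\Delta^1=\Delta$. For $r=1,\dots,m-1$ in turn: (Markup) for every position $(j-r,j)$ on the $r$-th diagonal with $\Delta^r_{j-r,j}\ne0$ such that no position in column $j$ was marked as a primary pivot at an earlier iteration: if some position $(j-r,p)$ of row $j-r$ was marked as a primary pivot at an earlier iteration, mark $(j-r,j)$ as a change-of-basis pivot of iteration $r$; otherwise mark $(j-r,j)$ permanently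 as a primary pivot. (Update) Let $T^r=I-\sum \frac{\Delta^r_{j-r,j}}{\Delta^r_{j-r,p}}U^{pj}$, the sum running over all change-of-basis pivots $(j-r,j)$ of iteration $r$, where $(j-r,p)$ is the primary pivot position in row $j-r$; set $\Delta^{r+1}=(T^r)^{-1}\Delta^rT^r$. *)

(* Defs.v *)
From HB Require Import structures.
From mathcomp Require Import all_boot all_order all_algebra.
Set Implicit Arguments. Unset Strict Implicit. Unset Printing Implicit Defensive.
Import GRing.Theory.
Local Open Scope ring_scope.

(* Indices are 0-based: 'I_m = {0,...,m-1}.  Positions are pairs (i, j). *)

(* Connection matrix with respect to a partition J_0 ⊔ ... ⊔ J_b of the
   index set, encoded by deg : 'I_m -> nat (i ∈ J_(deg i)), with deg i <= b. *)
Definition connection_matrix (F : fieldType) (m : nat) (D : 'M[F]_m)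
    (b : nat) (deg : 'I_m -> nat) : Prop :=
  [/\ forall i, (deg i <= b)%N,
      forall i j : 'I_m, (j < i)%N -> D i j = 0,
      D *m D = 0 &
      forall i j : 'I_m, D i j != 0 ->
        (i < j)%N /\ (1 <= deg j <= b)%N /\ deg j = (deg i).+1 ].

Section ISA.
Variables (F : fieldType) (m : nat).
Implicit Types (D : 'M[F]_m) (P : {set 'I_m * 'I_m}).

(* P = set of positions marked as primary pivots at earlier iterations. *)

Definition isa_cand D P (r : nat) (i j : 'I_m) : bool :=
  [&& (j == (i + r)%N :> nat), D i j != 0 & [forall q, (q, j) \notin P]].

Definition has_primary P (i : 'I_m) : bool := [exists p, (i, p) \in P].

Definition primary_col P (i : 'I_m) : 'I_m := odflt i [pick p | (i, p) \in P].

Definition isa_cob D P r (i j : 'I_m) : bool :=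
  isa_cand D P r i j && has_primary P i.

Definition isa_newprim D P r : {set 'I_m * 'I_m} :=
  [set x | isa_cand D P r x.1 x.2 && ~~ has_primary P x.1].

Definition isa_T D P r : 'M[F]_m :=
  1%:M - \sum_(i : 'I_m) \sum_(j : 'I_m | isa_cob D P r i j)
           (D i j / D i (primary_col P i)) *: delta_mx (primary_col P i) j.

Definition isa_step (r : nat) (s : 'M[F]_m * {set 'I_m * 'I_m}) :=
  let: (D, P) := s in
  let T := isa_T D P r in
  (invmx T *m D *m T, P :|: isa_newprim D P r).

(* state after iterations 1..k; its matrix component is Delta^(k+1) *)
Fixpoint isa_iter (D0 : 'M[F]_m) (k : nat) : 'M[F]_m * {set 'I_m * 'I_m} :=
  match k with
  | 0 => (D0, set0)
  | k'.+1 => isa_step k'.+1 (isa_iter D0 k')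
  end.

Definition isa_final (D0 : 'M[F]_m) : 'M[F]_m := (isa_iter D0 m.-1).1.

End ISA.

(* Main.v *)
Require Import Defs.
From HB Require Import structures.
From mathcomp Require Import all_boot all_order all_algebra.
From mathcomp Require Import zify.
Set Implicit Arguments. Unset Strict Implicit. Unset Printing Implicit Defensive.
Import GRing.Theory.
Local Open Scope ring_scope.

Definition Inv (F : fieldType) (m : nat) (D : 'M[F]_m) (P : {set 'I_m * 'I_m}) (r : nat) : Prop :=
 [/\ D *m D = 0,
     forall a b, (a,b) \in P -> D a b != 0 /\ (b < a + r)%N,
     forall a b c, (a,b) \in P -> (a,c) \in P -> b = c,
     forall a b c, (a,c) \in P -> (b,c) \in P -> a = b &
     forall a b, D a b != 0 -> (b < a + r)%N -> exists2 k : 'I_m, (a <= k)%N & (k,b) \in P].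

Lemma L1 (F : fieldType) m (D : 'M[F]_m) (P : {set 'I_m * 'I_m}) r (i p a : 'I_m) : Inv D P r -> (i,p) \in P -> (i < a)%N -> D a p = 0.
Proof.
case=> _ h2 _ h4 h5 ip ia; apply/eqP; apply: contraT => nz.
have [_ pr] := h2 _ _ ip.
have [k ak kp] := h5 _ _ nz (ltac:(lia)).
have := h4 _ _ _ ip kp => e; subst k; lia.
Qed.

Lemma L2 (F : fieldType) m (D : 'M[F]_m) (P : {set 'I_m * 'I_m}) r (a b : 'I_m) : Inv D P r -> (forall q, (q,b) \notin P) ->
  (b < a + r)%N -> D a b = 0.
Proof.
case=> _ _ _ _ h5 nb br; apply/eqP; apply: contraT => nz.
have [k _ kb] := h5 _ _ nz br; by have := nb k; rewrite kb.
Qed.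

Lemma pcP m (P : {set 'I_m * 'I_m}) (i : 'I_m) : has_primary P i -> (i, primary_col P i) \in P.
Proof.
rewrite /has_primary /primary_col => /existsP[p hp].
by case: pickP => [q -> //|/(_ p)]; rewrite hp.
Qed.

Definition isa_N (F : fieldType) (m : nat) (D : 'M[F]_m) (P : {set 'I_m * 'I_m}) r : 'M[F]_m :=
  \sum_(i : 'I_m) \sum_(j : 'I_m | isa_cob D P r i j)
           (D i j / D i (primary_col P i)) *: delta_mx (primary_col P i) j.

Lemma isa_TE (F : fieldType) m (D : 'M[F]_m) (P : {set 'I_m * 'I_m}) r : isa_T D P r = 1%:M - isa_N D P r.
Proof. by []. Qed.

Lemma NE (F : fieldType) m (D : 'M[F]_m) (P : {set 'I_m * 'I_m}) r (a b : 'I_m) : isa_N D P r a b =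
  \sum_(i : 'I_m) \sum_(j : 'I_m | isa_cob D P r i j)
     (D i j / D i (primary_col P i)) * ((a == primary_col P i) && (b == j))%:R.
Proof.
rewrite /isa_N summxE; apply: eq_bigr => i _; rewrite summxE.
by apply: eq_bigr => j _; rewrite !mxE.
Qed.

Lemma cob_inj (F : fieldType) m (D : 'M[F]_m) (P : {set 'I_m * 'I_m}) r (i i' b : 'I_m) : isa_cob D P r i b -> isa_cob D P r i' b -> i = i'.
Proof.
rewrite /isa_cob /isa_cand => /andP[/and3P[/eqP e1 _ _] _] /andP[/and3P[/eqP e2 _ _] _].
apply: val_inj => /=; lia.
Qed.

Lemma Nsupp (F : fieldType) m (D : 'M[F]_m) (P : {set 'I_m * 'I_m}) r (a b : 'I_m) : isa_N D P r a b != 0 ->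
  exists i, isa_cob D P r i b /\ a = primary_col P i.
Proof.
rewrite NE => nz.
case: (pickP (fun i => isa_cob D P r i b && (a == primary_col P i))) => [i /andP[h /eqP e] | none].
  by exists i.
exfalso; move: nz; apply/negP; rewrite negbK; apply/eqP.
apply: big1 => i _; apply: big1 => j cij.
case: eqP => [ea|_]; last by rewrite mulr0.
case: eqP => [eb|_]; last by rewrite mulr0.
by subst; have := none i; rewrite cij eqxx.
Qed.

Lemma Nval (F : fieldType) m (D : 'M[F]_m) (P : {set 'I_m * 'I_m}) r (i b : 'I_m) : isa_cob D P r i b ->
  isa_N D P r (primary_col P i) b = D i b / D i (primary_col P i).
Proof.
move=> cib; rewrite NE (bigD1 i) //= [X in _ + X]big1 ?addr0.
  rewrite (bigD1 b) //= [X in _ + X]big1 ?addr0 ?eqxx ?mulr1 // => j /andP[_ /negbTE].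
  by rewrite eq_sym => ->; rewrite andbF mulr0.
move=> i' ni; rewrite big1 // => j cj.
case: (b =P j) => [eb|_]; last by rewrite andbF mulr0.
subst j; by have := cob_inj cib cj => e; rewrite e eqxx in ni.
Qed.

Lemma cobE (F : fieldType) m (D : 'M[F]_m) (P : {set 'I_m * 'I_m}) r (i j : 'I_m) :
  isa_cob D P r i j -> [/\ (j : nat) = (i + r)%N, D i j != 0, forall q, (q,j) \notin P & has_primary P i].
Proof.
rewrite /isa_cob /isa_cand => /andP[/and3P[/eqP e nz /forallP h] hp]; split => //.
Qed.

Lemma sum_nz (F : fieldType) m (f : 'I_m -> F) : \sum_t f t != 0 -> exists t, f t != 0.
Proof.
move=> nz; case: (pickP (fun t => f t != 0)) => [t ht|none]; first by exists t.
by exfalso; move: nz; rewrite big1 ?eqxx // => t _; have := none t; move/negbFE/eqP.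
Qed.

Lemma NN (F : fieldType) m (D : 'M[F]_m) (P : {set 'I_m * 'I_m}) r :
  isa_N D P r *m isa_N D P r = 0.
Proof.
apply/matrixP => a b; rewrite !mxE; apply: big1 => t _.
case: (eqVneq (isa_N D P r a t) 0) => [->|h1]; first by rewrite mul0r.
case: (eqVneq (isa_N D P r t b) 0) => [->|h2]; first by rewrite mulr0.
have [i [ci _]] := Nsupp h1; have [i' [ci' et]] := Nsupp h2.
have [_ _ nq _] := cobE ci; have [_ _ _ hp] := cobE ci'.
by have := nq i'; rewrite et pcP.
Qed.

Lemma Tinv (F : fieldType) m (D : 'M[F]_m) (P : {set 'I_m * 'I_m}) r :
  isa_T D P r *m (1%:M + isa_N D P r) = 1%:M /\
  invmx (isa_T D P r) = 1%:M + isa_N D P r.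
Proof.
have h : isa_T D P r *m (1%:M + isa_N D P r) = 1%:M.
  by rewrite isa_TE mulmxBl mul1mx mulmxDr mulmx1 NN addr0 addrK.
split => //; have [u _] := mulmx1_unit h.
have := congr1 (mulmx (invmx (isa_T D P r))) h.
by rewrite mulmxA mulVmx // mul1mx mulmx1 => ->.
Qed.

Definition isa_M (F : fieldType) m (D : 'M[F]_m) (P : {set 'I_m * 'I_m}) r :=
  D *m (1%:M - isa_N D P r).

Lemma ME (F : fieldType) m (D : 'M[F]_m) (P : {set 'I_m * 'I_m}) r (a b : 'I_m) :
  isa_M D P r a b = D a b - \sum_t D a t * isa_N D P r t b.
Proof. by rewrite /isa_M mulmxBr mulmx1 !mxE. Qed.

Lemma M_noncob (F : fieldType) m (D : 'M[F]_m) (P : {set 'I_m * 'I_m}) r (a b : 'I_m) :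
  (forall i, ~~ isa_cob D P r i b) -> isa_M D P r a b = D a b.
Proof.
move=> nc; rewrite ME big1 ?subr0 // => t _.
case: (eqVneq (isa_N D P r t b) 0) => [->|h]; first by rewrite mulr0.
by have [i [ci _]] := Nsupp h; have := nc i; rewrite ci.
Qed.

Lemma M_cob (F : fieldType) m (D : 'M[F]_m) (P : {set 'I_m * 'I_m}) r (i a b : 'I_m) :
  Inv D P r -> isa_cob D P r i b -> (i <= a)%N -> isa_M D P r a b = 0.
Proof.
move=> hI ci ia; have [eb nz nq hp] := cobE ci.
have pin := pcP hp; have [_ h2 _ _ _] := hI.
have [pnz pr] := h2 _ _ pin.
rewrite ME (bigD1 (primary_col P i)) //= [X in _ - (_ + X)]big1 ?addr0; last first.
  move=> t nt; case: (eqVneq (isa_N D P r t b) 0) => [->|h]; first by rewrite mulr0.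
  have [i' [ci' et]] := Nsupp h; have e := cob_inj ci ci'; subst i'.
  by rewrite et eqxx in nt.
rewrite Nval //.
case: (ltnP i a) => [lt|ge].
  rewrite (L1 hI pin lt) mul0r subr0.
  apply: (L2 hI nq); lia.
have -> : a = i by apply: ord_inj; lia.
by rewrite mulrC mulfVK // subrr.
Qed.

Lemma Mkey (F : fieldType) m (D : 'M[F]_m) (P : {set 'I_m * 'I_m}) r (a b : 'I_m) :
  Inv D P r -> isa_M D P r a b != 0 -> (b < a + r.+1)%N ->
  exists2 k : 'I_m, (a <= k)%N & (k,b) \in P :|: isa_newprim D P r.
Proof.
move=> hI nz bl; have [_ h2 _ _ h5] := hI.
case: (pickP (fun i => isa_cob D P r i b)) => [i ci|none].
  case: (leqP i a) => ia; first by rewrite (M_cob hI ci ia) eqxx in nz.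
  have [eb _ _ _] := cobE ci; lia.
have nc : forall i, ~~ isa_cob D P r i b by move=> i; rewrite none.
rewrite M_noncob // in nz.
case: (ltnP b (a + r)) => br.
  by have [k ak kp] := h5 _ _ nz br; exists k => //; rewrite inE kp.
case: (pickP (fun q => (q, b) \in P)) => [q qb|noq].
  exists q; last by rewrite inE qb.
  have [_ qr] := h2 _ _ qb; lia.
have cab : isa_cand D P r a b.
  apply/and3P; split => //; first by apply/eqP; lia.
  by apply/forallP => q; rewrite noq.
exists a => //; rewrite inE; apply/orP; right; rewrite inE /= cab /=.
by have := nc a; rewrite /isa_cob cab.
Qed.

Lemma step_inv (F : fieldType) m (D : 'M[F]_m) (P : {set 'I_m * 'I_m}) r :
  Inv D P r ->
  Inv (invmx (isa_T D P r) *m D *m isa_T D P r) (P :|: isa_newprim D P r) r.+1.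
Proof.
move=> hI; have [h1 h2 h3 h4 h5] := hI.
have [hT ->] := Tinv D P r.
set N := isa_N D P r.
have DE : (1%:M + N) *m D *m isa_T D P r = isa_M D P r + N *m isa_M D P r.
  by rewrite isa_TE -mulmxA mulmxDl mul1mx.
have DE2 : forall a b, ((1%:M + N) *m D *m isa_T D P r) a b
    = isa_M D P r a b + \sum_t N a t * isa_M D P r t b.
  by move=> a b; rewrite DE !mxE.
split.
- have -> : ((1%:M + N) *m D *m isa_T D P r) *m ((1%:M + N) *m D *m isa_T D P r)
     = (1%:M + N) *m D *m (isa_T D P r *m (1%:M + N)) *m D *m isa_T D P r by rewrite !mulmxA.
  by rewrite hT mulmx1 -(mulmxA _ D D) h1 mulmx0 mul0mx.
- move=> a b; rewrite inE => /orP[ab|].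
    have [nz br] := h2 _ _ ab; split; last by lia.
    have nc : forall i, ~~ isa_cob D P r i b.
      by move=> i; apply/negP => ci; have [_ _ nq _] := cobE ci; have := nq a; rewrite ab.
    rewrite DE2 M_noncob // big1 ?addr0 // => t _.
    case: (eqVneq (N a t) 0) => [->|h]; first by rewrite mul0r.
    have [i [ci ea]] := Nsupp h; have [et _ _ hp] := cobE ci.
    have [_ ar] := h2 _ _ (pcP hp); rewrite -ea in ar.
    by rewrite M_noncob // (L1 hI ab (_ : (a < t)%N)) ?mulr0 //; lia.
  rewrite inE /= => /andP[cab nh].
  move: (cab); rewrite /isa_cand => /and3P[/eqP eb nz /forallP nq].
  split; last by lia.
  have nc : forall i, ~~ isa_cob D P r i b.
    move=> i; apply/negP => ci; have [ei _ _ hp] := cobE ci.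
    have e : i = a by apply: ord_inj; lia.
    by subst i; rewrite hp in nh.
  rewrite DE2 M_noncob // big1 ?addr0 // => t _.
  case: (eqVneq (N a t) 0) => [->|h]; first by rewrite mul0r.
  have [i [ci ea]] := Nsupp h; have [et _ _ hp] := cobE ci.
  have [_ ar] := h2 _ _ (pcP hp); rewrite -ea in ar.
  rewrite M_noncob // (L2 hI (b := b) (a := t)) ?mulr0 //; last by lia.
- move=> a b c; rewrite !inE => /orP[ab|nab] /orP[ac|nac].
  + exact: h3 ab ac.
  + move: nac; rewrite ?inE /= => /andP[_ nh].
    by move: nh; rewrite /has_primary; case/existsP; exists b.
  + move: nab; rewrite ?inE /= => /andP[_ nh].
    by move: nh; rewrite /has_primary; case/existsP; exists c.
  + move: nab nac; rewrite ?inE /= => /andP[/and3P[/eqP e1 _ _] _] /andP[/and3P[/eqP e2 _ _] _].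
    apply: ord_inj; lia.
- move=> a b c; rewrite !inE => /orP[ac|nac] /orP[bc|nbc].
  + exact: h4 ac bc.
  + move: nbc; rewrite ?inE /= => /andP[/and3P[_ _ /forallP nq] _].
    by have := nq a; rewrite ac.
  + move: nac; rewrite ?inE /= => /andP[/and3P[_ _ /forallP nq] _].
    by have := nq b; rewrite bc.
  + move: nac nbc; rewrite ?inE /= => /andP[/and3P[/eqP e1 _ _] _] /andP[/and3P[/eqP e2 _ _] _].
    apply: ord_inj; lia.
- move=> a b; rewrite DE2 => nz bl.
  case: (eqVneq (isa_M D P r a b) 0) => [Mz|Mnz]; last exact: Mkey.
  rewrite Mz add0r in nz; have [t ht] := sum_nz nz.
  have [hN hM] : N a t != 0 /\ isa_M D P r t b != 0.
    by split; apply: contraNneq ht => ->; rewrite ?mul0r ?mulr0.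
  have [i [ci ea]] := Nsupp hN; have [et _ _ hp] := cobE ci.
  have [_ ar] := h2 _ _ (pcP hp); rewrite -ea in ar.
  have bt : (b < t + r.+1)%N by lia.
  have [k tk kp] := Mkey hI hM bt.
  by exists k => //; lia.
Qed.

Lemma iter_inv (F : fieldType) m (D : 'M[F]_m) b (deg : 'I_m -> nat) :
  connection_matrix D b deg -> forall k, Inv (isa_iter D k).1 (isa_iter D k).2 k.+1.
Proof.
case=> _ _ hDD hnz; elim=> [|k IH] /=.
  split => //; try by move=> *; rewrite inE in H.
  - by move=> a b0; rewrite inE.
  - by move=> a b0 c; rewrite inE.
  - by move=> a b0 c; rewrite inE.
  move=> a b0 nz lt; have [ab _] := hnz _ _ nz; lia.
move: IH; case: (isa_iter D k) => D1 P1 /= IH.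
exact: step_inv.
Qed.

Theorem mainTheorem4 (F : fieldType) (m : nat) (hm : (1 <= m)%N)
    (D : 'M[F]_m) (b : nat) (deg : 'I_m -> nat)
    (hD : connection_matrix D b deg) :
  forall j : 'I_m, col j (isa_final D) != 0 -> row j (isa_final D) = 0.
Proof.
move=> j.
have := iter_inv hD m.-1; rewrite /isa_final.
case: (isa_iter D m.-1) => X P /=.
rewrite prednK // => -[h1 h2 h3 h4 h5] cj.
have lowP : forall a t : 'I_m, X a t != 0 ->
    (a <= odflt t [pick k | (k, t) \in P])%N /\ (odflt t [pick k | (k, t) \in P], t) \in P.
  move=> a t nz; have ta : (t < a + m)%N by have := ltn_ord t; lia.
  have [k ak kt] := h5 _ _ nz ta.
  case: pickP => [k' kt'|/(_ k)]; last by rewrite kt.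
  by have e := h4 _ _ _ kt kt'; subst k'.
set low := fun t => odflt t [pick k | (k, t) \in P] in lowP.
have [a0 ha0] : exists a, X a j != 0.
  case: (pickP (fun a => X a j != 0)) => [a ha|none]; first by exists a.
  exfalso; move: cj; apply/negP; rewrite negbK; apply/eqP/colP => a.
  by rewrite !mxE; have := none a; move/negbFE/eqP.
apply/rowP => l; rewrite !mxE; apply/eqP; apply: contraT => nz.
pose S := fun t : 'I_m => (X t l != 0) && [exists a, X a t != 0].
have Sj : S j by rewrite /S nz /=; apply/existsP; exists a0.
case: (@arg_maxnP _ j S (fun t => nat_of_ord (low t)) Sj) => ts Sts maxl.
move: Sts; rewrite /S => /andP[tsl /existsP[a1 ha1]].
have [_ kin] := lowP _ _ ha1.
have : (X *m X) (low ts) l = 0 by rewrite h1 mxE.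
rewrite mxE (bigD1 ts) //= [X in _ + X]big1 ?addr0; last first.
  move=> t nt; case: (eqVneq (X (low ts) t) 0) => [->|hk]; first by rewrite mul0r.
  case: (eqVneq (X t l) 0) => [->|htl]; first by rewrite mulr0.
  have St : S t by rewrite /S htl /=; apply/existsP; exists (low ts).
  have [le1 kt] := lowP _ _ hk; have le2 := maxl t St.
  rewrite -/(low t) in le1 kt; rewrite /geq in le2.
  have e : low t = low ts by apply: ord_inj; lia.
  by rewrite e in kt; have := h3 _ _ _ kt kin => et; rewrite et eqxx in nt.
have [knz _] := h2 _ _ kin.
by move/eqP; rewrite mulf_eq0 (negbTE knz) (negbTE tsl).
Qed.
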